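(* Assume that $\mathfrak c$ is regular and that there exist $\mathfrak c$ pairwise incomparable selective ultrafilters on $\omega$. Then there exists $X$ with $\omega\subseteq X\subseteq\beta\omega$ such that $\omega^\alpha$ is relatively countably compact in $X^\alpha$ for each $\alpha<\mathfrak c$, but $\operatorname{CL}(X)$ is not pseudocompact.
   Context: $\beta\omega$ is the Stone–Čech compactification of the discrete space $\omega$ (ultrafilters on $\omega$). A free ultrafilter $q$ on $\omega$ is selective if for every partition of $\omega$ into pieces not in $q$ there is a set in $q$ meeting each piece in at most one point. Two ultrafilters $q_0,q_1$ on $\omega$ are incomparable if for every bijection $f:\omega\to\omega$, the ultrafilter generated by $\{f[A]:A\in q_0\}$ is not $q_1$. A subset $Y$ of a space $Z$ is relatively countably compact in $Z$ if every countably infinite subset of $Y$ has an accumulation point in $Z$. Powers carry the product topology. $\operatorname{CL}(X)$ is the set of nonempty closed subsets of $X$ with the Vietoris topology; pseudocompact means every continuous real-valued function is bounded. *)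

(* Defs.v *)
From HB Require Import structures.
From mathcomp Require Import all_boot all_order all_algebra.
From mathcomp Require Import all_classical all_reals all_analysis.
From mathcomp Require Import Rstruct Rstruct_topology.

Set Implicit Arguments.
Unset Strict Implicit.
Unset Printing Implicit Defensive.

Import Num.Theory.
Local Open Scope classical_set_scope.
Local Open Scope ring_scope.

Definition lt_c {T : Type} (A : set T) : Prop :=
  ~ ([set: set nat] #<= A)%card.

(** c is regular (cf(c) = c): a union of fewer than c sets, each of
    cardinality less than c, has cardinality less than c.  (All the sets are
    taken inside a carrier of cardinality c, namely P(omega).) *)
Definition c_regular : Prop :=
  forall F : set (set (set nat)),
    lt_c F -> (forall A, F A -> lt_c A) -> lt_c (\bigcup_(A in F) A).

Definition free_ultrafilter (q : set_system nat) : Prop :=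
  UltraFilter q /\ \bigcap_(A in q) A = set0.

Definition selective (q : set_system nat) : Prop :=
  free_ultrafilter q /\
  forall P : set (set nat),
    (forall C, P C -> C !=set0) ->
    (forall C D, P C -> P D -> C <> D -> C `&` D = set0) ->
    \bigcup_(C in P) C = setT ->
    (forall C, P C -> ~ q C) ->
    exists2 B, q B &
      forall C, P C -> forall x y, (B `&` C) x -> (B `&` C) y -> x = y.

Definition image_filter (f : nat -> nat) (q : set_system nat) : set_system nat :=
  [set B | exists2 A, q A & f @` A `<=` B].

Definition incomparable (q0 q1 : set_system nat) : Prop :=
  forall f : nat -> nat, bijective f -> image_filter f q0 <> q1.

(** [sysnat] is the type of all set systems on omega, topologized by the
    subbase { {p | A \in p} : A \subseteq omega }.  beta omega is the subspace
    of ultrafilters (the usual Stone topology); omega is embedded as the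
    principal ultrafilters. *)
Definition sysnat := set_system nat.
HB.instance Definition _ := Pointed.on sysnat.
HB.instance Definition _ :=
  isSubBaseTopological.Build sysnat (@setT (set nat))
    (fun A : set nat => [set p : sysnat | p A]).

Definition beta_omega : set sysnat := [set p | UltraFilter p].
Definition omega_in_beta : set sysnat := [set principal_filter n | n in setT].

Definition rel_countably_compact (Z : topologicalType) (Y : set Z) : Prop :=
  forall S : set Z, S `<=` Y -> countable S -> infinite_set S ->
    exists z : Z, limit_point S z.

Definition vietoris (T : Type) := set T.
HB.instance Definition _ (T : topologicalType) := Pointed.on (vietoris T).
(** subbase: <U>^+ = {A | A \subseteq U} and U^- = {A | A meets U}, U open *)
HB.instance Definition _ (T : topologicalType) :=
  isSubBaseTopological.Build (vietoris T)
    [set Ub : set T * bool | open Ub.1]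
    (fun Ub => if Ub.2 then [set A : vietoris T | A `<=` Ub.1]
               else [set A : vietoris T | A `&` Ub.1 !=set0]).

Definition CL (T : topologicalType) : set (vietoris T) :=
  [set A | closed A /\ A !=set0].

Definition pseudocompact (T : topologicalType) : Prop :=
  forall f : T -> Rdefinitions.R, continuous f ->
    exists M : Rdefinitions.R, forall x, `|f x| <= M.
Arguments CL T : clear implicits.

(* Main.v *)
Require Import Defs.
From HB Require Import structures.
From mathcomp Require Import all_boot all_order all_algebra.
From mathcomp Require Import all_classical all_reals all_analysis.
From mathcomp Require Import Rstruct Rstruct_topology.
From mathcomp Require wochoice.
Local Open Scope classical_set_scope.

Set Implicit Arguments.
Unset Strict Implicit.
Unset Printing Implicit Defensive.


Lemma ultra_of (T : Type) (F : set_system T) :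
  ProperFilter F -> (forall A, F A \/ F (~` A)) -> UltraFilter F.
Proof.
move=> PF H; split => // G PG FG; apply/seteqP; split => // A GA.
case: (H A) => // /FG GnA.
have /filter_ex [x [Ax nAx]] : G (A `&` ~` A) by apply: filterI.
by case: (nAx Ax).
Qed.

Lemma image_filter_filter (f : nat -> nat) (F : set_system nat) :
  Filter F -> Filter (image_filter f F).
Proof.
move=> FF; split.
- by exists setT; [exact: filterT|].
- move=> A B [A' FA' sA] [B' FB' sB]; exists (A' `&` B'); first exact: filterI.
  by move=> _ [x [? ?] <-]; split; [apply: sA|apply: sB]; exists x.
- by move=> A B AB [A' FA' sA]; exists A' => //; apply: subset_trans AB.
Qed.

Lemma image_filter_proper (f : nat -> nat) (F : set_system nat) :
  ProperFilter F -> ProperFilter (image_filter f F).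
Proof.
move=> PF; apply: Build_ProperFilter_ex; last exact: image_filter_filter.
by move=> A [A' /filter_ex [x A'x] sA]; exists (f x); apply: sA; exists x.
Qed.

Lemma image_filter_ultra (f : nat -> nat) (F : set_system nat) :
  UltraFilter F -> UltraFilter (image_filter f F).
Proof.
move=> UF; apply: ultra_of; first exact: image_filter_proper.
move=> B; case: (in_ultra_setVsetC (f @^-1` B) UF) => H.
  by left; exists (f @^-1` B) => // _ [x Bx <-].
by right; exists (~` (f @^-1` B)) => // _ [x Bx <-].
Qed.

Lemma image_filter_eq (f g : nat -> nat) (F : set_system nat) :
  Filter F -> F [set x | f x = g x] -> image_filter f F = image_filter g F.
Proof.
move=> FF Fe; apply/seteqP; split => B [A FA sA].
  exists (A `&` [set x | f x = g x]); first exact: filterI.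
  by move=> _ [x [Ax e] <-]; apply: sA; exists x; rewrite ?e.
exists (A `&` [set x | f x = g x]); first exact: filterI.
by move=> _ [x [Ax e] <-]; apply: sA; exists x; rewrite ?e.
Qed.

Lemma free_not1 (v : set_system nat) k : free_ultrafilter v -> ~ v [set k].
Proof.
move=> [Uv Iv] vk.
have : (\bigcap_(A in v) A) k.
  move=> A vA; have /filter_ex [x [Ax xk]] : v (A `&` [set k]) by apply: filterI.
  by rewrite -xk.
by rewrite Iv.
Qed.

Lemma free_notC1 (v : set_system nat) k : free_ultrafilter v -> v (~` [set k]).
Proof.
move=> fv; case: (in_ultra_setVsetC [set k] fv.1) => // /(free_not1 fv).
by [].
Qed.

Lemma free_ge (v : set_system nat) k : free_ultrafilter v -> v [set n | (k <= n)%N].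
Proof.
move=> fv; have Uv := fv.1; elim: k => [|k IH].
  by apply: filterS (filterT); move=> n _.
have : v ([set n | (k <= n)%N] `&` ~` [set k]) by apply: filterI => //; exact: free_notC1.
apply: filterS.
move=> n [kn nk] /=; rewrite ltn_neqAle kn andbT; apply/eqP => e; apply: nk.
by rewrite e.
Qed.

Lemma free_not_le (v : set_system nat) k : free_ultrafilter v ->
  ~ v [set n | (n <= k)%N].
Proof.
move=> fv vk; have Uv := fv.1.
have /filter_ex [n /= [nk kn]] : v ([set n | (n <= k)%N] `&` [set n | (k.+1 <= n)%N]).
  by apply: filterI => //; exact: free_ge.
by have := leq_trans kn nk; rewrite ltnn.
Qed.

Lemma free_not_atmost1 (v : set_system nat) (A : set nat) : free_ultrafilter v ->
  (forall x y, A x -> A y -> x = y) -> ~ v A.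
Proof.
move=> fv H vA; have Uv := fv.1; have [x Ax] : exists x, A x by apply: filter_ex vA.
have Hx : v [set x] by apply: filterS vA => y Ay; exact: H.
exact: (free_not1 fv Hx).
Qed.

Lemma sel_dich (q : set_system nat) (g : nat -> nat) : selective q ->
  (exists y, q (g @^-1` [set y])) \/
  (exists2 B, q B & forall x y, B x -> B y -> g x = g y -> x = y).
Proof.
move=> [fq Hs]; case: (pselect (exists y, q (g @^-1` [set y]))) => [|nq]; [by left|right].
pose P := [set C | exists y, C = g @^-1` [set y] /\ C !=set0].
have [||||B qB HB] := Hs P.
- by move=> C [y [-> ne]].
- move=> C D [y [-> _]] [z [-> _]] neq; apply/seteqP; split => x // [/= gy gz].
  by exfalso; apply: neq; rewrite -gy -gz.
- apply/seteqP; split => x // _; exists (g @^-1` [set g x]) => //.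
  by exists (g x); split => //; exists x.
- by move=> C [y [-> _]] qC; apply: nq; exists y.
exists B => // x y Bx By gxy; apply: (HB (g @^-1` [set g x])).
- by exists (g x); split => //; exists x.
- by split.
- by split => //=; rewrite gxy.
Qed.

Lemma infinite_even : infinite_set [set n : nat | ~~ odd n].
Proof.
apply/infiniteP; apply/pcard_leP; apply/injfunPex; exists (fun n => n.*2).
  by move=> n _ /=; rewrite odd_double.
by move=> x y _ _ /=; apply: double_inj.
Qed.

Lemma infinite_odd : infinite_set [set n : nat | odd n].
Proof.
apply/infiniteP; apply/pcard_leP; apply/injfunPex; exists (fun n => n.*2.+1).
  by move=> n _ /=; rewrite odd_double.
by move=> x y _ _ /= []; apply: double_inj.
Qed.


Lemma inf_bij (A B : set nat) : infinite_set A -> infinite_set B ->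
  exists e, set_bij A B e.
Proof.
move=> iA iB; apply/card_set_bijP.
have hA : (A #= [set: nat])%card by apply: eq_card_nat => //; exact: card_leT.
have hB : (B #= [set: nat])%card by apply: eq_card_nat => //; exact: card_leT.
apply: card_eq_trans hA _; exact: card_esym.
Qed.

Lemma parity_choice (q : set_system nat) : UltraFilter q ->
  exists P, exists C, [/\ q P, infinite_set C & forall n, P n -> ~ C n].
Proof.
move=> Uq; case: (in_ultra_setVsetC [set n : nat | ~~ odd n] Uq) => h.
  exists [set n : nat | ~~ odd n], [set n | odd n]; split => //.
    exact: infinite_odd.
  by move=> n /= /negP.
exists (~` [set n : nat | ~~ odd n]), [set n | ~~ odd n]; split => //.
  exact: infinite_even.
Qed.

Lemma ext_bij (q : set_system nat) (k : nat -> nat) (H : set nat) :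
  UltraFilter q -> q H -> (forall x y, H x -> H y -> k x = k y -> x = y) ->
  exists f, bijective f /\ q [set x | f x = k x].
Proof.
move=> Uq qH kinj.
have [P1 [C1 [qP1 iC1 d1]]] := parity_choice Uq.
have [P2 [C2 [qP2 iC2 d2]]] := parity_choice (image_filter_ultra k Uq).
have [A2 qA2 sA2] := qP2.
pose H2 := H `&` P1 `&` A2.
have qH2 : q H2 by apply: filterI => //; apply: filterI.
have iH2 : infinite_set (~` H2).
  apply: sub_infinite_set iC1 => n C1n [[_ /d1]]; exact.
have ikH2 : infinite_set (~` (k @` H2)).
  apply: sub_infinite_set iC2 => n C2n [x [[_ _] A2x] kxn].
  by apply: (d2 n) => //; apply: sA2; exists x.
have [e [ef ei es]] := inf_bij iH2 ikH2.
pose f x := if `[< H2 x >] then k x else e x.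
exists f; split; last first.
  by apply: filterS qH2 => x H2x; rewrite /= /f asboolT.
have fH x : H2 x -> f x = k x by move=> hx; rewrite /f asboolT.
have fN x : ~ H2 x -> f x = e x by move=> hx; rewrite /f asboolF.
rewrite -setTT_bijective; split.
- by [].
- move=> x y _ _.
  case: (pselect (H2 x)) => hx; case: (pselect (H2 y)) => hy.
  + rewrite !fH //; apply: kinj; [exact: hx.1.1|exact: hy.1.1].
  + rewrite fH // fN // => e1.
    by exfalso; apply: (ef y hy); exists x.
  + rewrite fN // fH // => e1.
    by exfalso; apply: (ef x hx); exists y => //; rewrite e1.
  + rewrite !fN // => e1; apply: ei e1; exact/mem_set.
- move=> y _; case: (pselect ((k @` H2) y)) => [[x H2x <-]|hy].
    by exists x => //; rewrite fH.
  have [x nx <-] := es y hy.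
  by exists x => //; rewrite fN.
Qed.

Lemma rk_bij (qa qb : set_system nat) (h g : nat -> nat) :
  selective qa -> selective qb -> image_filter h qa = image_filter g qb ->
  (forall y, ~ image_filter h qa [set y]) ->
  exists f, bijective f /\ image_filter f qa = qb.
Proof.
move=> sa sb e np.
have Ua := sa.1.1; have Ub := sb.1.1.
have [[y qy]|[H qH hinj]] := sel_dich h sa.
  by exfalso; apply: (np y); exists (h @^-1` [set y]) => // _ [x hx <-].
have [[y qy]|[K qK ginj]] := sel_dich g sb.
  by exfalso; apply: (np y); rewrite e; exists (g @^-1` [set y]) => // _ [x hx <-].
have : image_filter h qa (g @` K) by rewrite e; exists K.
move=> [A qA sA].
pose H1 := H `&` A.
have qH1 : qa H1 by apply: filterI.
pose k x := xget 0 [set y | K y /\ g y = h x].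
have kP x : H1 x -> K (k x) /\ g (k x) = h x.
  move=> [Hx Ax]; apply: (@xgetPex _ 0 [set y | K y /\ g y = h x]).
  have [y Ky gy] : (g @` K) (h x) by apply: sA; exists x.
  by exists y.
have kinj : forall x y, H1 x -> H1 y -> k x = k y -> x = y.
  move=> x y hx hy kxy; apply: hinj; [exact: hx.1|exact: hy.1|].
  by rewrite -(kP x hx).2 -(kP y hy).2 kxy.
have ek : image_filter k qa = qb.
  apply: (@max_filter _ qb Ub); first exact: image_filter_proper.
  move=> B qB.
  have : image_filter g qb (g @` (B `&` K)) by exists (B `&` K) => //; apply: filterI.
  rewrite -e => -[C qC sC].
  exists (C `&` H1); first by apply: filterI.
  move=> _ [x [Cx H1x] <-].
  have [y [By Ky] gy] : (g @` (B `&` K)) (h x) by apply: sC; exists x.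
  have [Kkx gkx] := kP x H1x.
  have -> : k x = y by apply: ginj => //; rewrite gkx gy.
  exact: By.
have [f [bf qf]] := ext_bij Ua qH1 kinj.
exists f; split => //; rewrite -ek; apply: image_filter_eq => //.
Qed.

Lemma wo_min (r : rel (set nat)) : wochoice.well_order r ->
  forall P : set (set nat), P !=set0 -> exists z, P z /\ forall t, P t -> r z t.
Proof.
move=> wr P [x Px].
have nA : wochoice.nonempty [pred y | `[< P y >]].
  by exists x; rewrite inE.
have [z [[zA lb] _]] := wr _ nA.
exists z; split; first by move: zA; rewrite inE.
by move=> t Pt; apply: lb; rewrite inE.
Qed.

Lemma wo_exists : exists R : set nat -> set nat -> Prop,
  [/\ (forall x y, R x y \/ R y x), (forall x y, R x y -> R y x -> x = y) &
      (forall P : set (set nat), P !=set0 -> exists z, P z /\ forall t, P t -> R z t)].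
Proof.
have [r wr] := wochoice.well_ordering_principle (set nat).
have minP := wo_min wr.
exists (fun x y => r x y); split.
- move=> x y; have [z [[->|->] h]] := minP [set x; y] (ex_intro _ x (or_introl erefl)).
  + by left; apply: h; right.
  + by right; apply: h; left.
- move=> x y rxy ryx.
  have nA : wochoice.nonempty [pred t | `[< [set x; y] t >]].
    by exists x; rewrite inE; left.
  have [z [_ uz]] := wr _ nA.
  have rr t : r t t by have [z' [-> h]] := minP [set t] (ex_intro _ t erefl); apply: h.
  have mx : wochoice.minimum_of r [pred t | `[< [set x; y] t >]] x.
    split; first by rewrite inE; left.
    by move=> t; rewrite inE => -[->|->].
  have my : wochoice.minimum_of r [pred t | `[< [set x; y] t >]] y.
    split; first by rewrite inE; right.
    by move=> t; rewrite inE => -[->|->].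
  by rewrite -(uz _ mx) -(uz _ my).
- exact: minP.
Qed.

Lemma lt_c_le {T U : Type} (A : set T) (B : set U) :
  (A #<= B)%card -> lt_c B -> lt_c A.
Proof. by move=> AB nB cA; apply: nB; exact: card_le_trans cA AB. Qed.

Lemma lt_c_image {T U : Type} (f : T -> U) (A : set T) : lt_c A -> lt_c (f @` A).
Proof. exact: lt_c_le (card_image_le f A). Qed.

Lemma not_lt_c_inj {T : pointedType} (B : set T) (phi : set nat -> T) :
  (forall x y, phi x = phi y -> x = y) -> (forall x, B (phi x)) -> ~ lt_c B.
Proof.
move=> pinj pB nB; apply: nB; apply/pcard_leP; apply/injfunPex; exists phi.
  by move=> x _; exact: pB.
by move=> x y _ _; exact: pinj.
Qed.

Lemma set0_neq1 : (set0 : set nat) <> [set 0%N].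
Proof. by move=> e; have : [set 0%N] 0%N by []; rewrite -e. Qed.

Lemma set0_neqT : (set0 : set nat) <> setT.
Proof. by move=> e; have : (setT : set nat) 0%N by []; rewrite -e. Qed.

Lemma set1_neqT : ([set 0%N] : set nat) <> setT.
Proof. by move=> e; have : (setT : set nat) 1%N by []; rewrite -e. Qed.

Lemma lt_c_set1 {T : pointedType} (x : T) : lt_c [set x].
Proof.
move=> /pcard_leP /injfunPex [f ff fi]; apply: set0_neqT; apply: fi.
- exact/mem_set.
- exact/mem_set.
- by rewrite (ff set0 I) (ff setT I).
Qed.

Lemma lt_c_two {T : pointedType} (X Y : T) : lt_c [set X; Y].
Proof.
move=> /pcard_leP /injfunPex [f ff fi].
have fi' a b : f a = f b -> a = b by move=> e; apply: fi => //; exact/mem_set.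
have h0 := ff set0 I; have h1 := ff [set 0%N] I; have h2 := ff setT I.
case: h0 => e0; case: h1 => e1; case: h2 => e2.
- by apply: set0_neq1; apply: fi'; rewrite e0 e1.
- by apply: set0_neq1; apply: fi'; rewrite e0 e1.
- by apply: set0_neqT; apply: fi'; rewrite e0 e2.
- by apply: set1_neqT; apply: fi'; rewrite e1 e2.
- by apply: set1_neqT; apply: fi'; rewrite e1 e2.
- by apply: set0_neqT; apply: fi'; rewrite e0 e2.
- by apply: set0_neq1; apply: fi'; rewrite e0 e1.
- by apply: set0_neq1; apply: fi'; rewrite e0 e1.
Qed.

Lemma lt_c_U (creg : c_regular) (A B : set (set nat)) :
  lt_c A -> lt_c B -> lt_c (A `|` B).
Proof.
move=> sA sB.
have := creg [set A; B] (@lt_c_two _ A B).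
have /[swap] /[apply] : forall C, [set A; B] C -> lt_c C by move=> C [->|->].
apply: lt_c_le; apply: subset_card_le => x [Ax|Bx].
  by exists A => //; left.
by exists B => //; right.
Qed.

Definition code (g : nat -> nat) : set nat := [set k | exists n, k = pickle (n, g n)].

Lemma code_inj g g' : code g = code g' -> g = g'.
Proof.
move=> e; apply: funext => n.
have : code g' (pickle (n, g n)) by rewrite -e; exists n.
by move=> [n' /(pcan_inj pickleK)] [-> ->].
Qed.

Lemma cofinal (creg : c_regular) : exists G : set nat -> set (nat -> nat),
  (forall a (phi : set nat -> (nat -> nat)), (forall x y, phi x = phi y -> x = y) ->
     ~ (forall x, G a (phi x))) /\
  (forall J : set (set nat), lt_c J -> forall g : set nat -> (nat -> nat),
     exists a, forall j, J j -> G a (g j)).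
Proof.
have [R [Rtot Ranti Rmin]] := wo_exists.
pose seg x := [set y | R y x].
pose W := [set x | lt_c (seg x)].
have Wbig : ([set: set nat] #<= W)%card.
  apply: contrapT => nW.
  case: (pselect (exists x, ~ W x)) => [ex|nex]; last first.
    apply: nW; apply: subset_card_le => x _; apply: contrapT => nx.
    by apply: nex; exists x.
  have [x0 [nWx0 mx0]] := Rmin (~` W) ex.
  apply: nWx0; rewrite /W /=.
  apply: (@lt_c_le _ _ _ (W `|` [set x0])); last exact: lt_c_U nW (@lt_c_set1 _ x0).
  apply: subset_card_le => y Ryx0; case: (pselect (W y)) => [Wy|nWy]; first by left.
  by right; apply: Ranti => //; apply: mx0.
have [iota iW iinj] : exists2 iota : set nat -> set nat, (forall x, W (iota x)) &
    (forall x y, iota x = iota y -> x = y).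
  move/pcard_leP: Wbig => /injfunPex [f ff fi]; exists f.
    by move=> x; apply: ff.
  by move=> x y e; apply: fi => //; exact/mem_set.
have bound : forall C, C `<=` W -> lt_c C -> exists b, W b /\ C `<=` seg b.
  move=> C CW sC; apply: contrapT => nb.
  have : lt_c W.
    apply: (@lt_c_le _ _ _ (\bigcup_(A in seg @` C) A)); last first.
      apply: creg; first exact: lt_c_image.
      by move=> A [c Cc <-]; apply: CW.
    apply: subset_card_le => b Wb.
    apply: contrapT => nU; apply: nb; exists b; split => // c Cc.
    case: (Rtot c b) => // Rbc; exfalso; apply: nU.
    by exists (seg c); [exists c|].
  by apply.
exists (fun a => [set g | W a /\ R (iota (code g)) a]); split.
- move=> a phi pinj hphi.
  have Wa := (hphi set0).1.
  apply: (not_lt_c_inj (B := seg a) (phi := fun x => iota (code (phi x)))) => //.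
    by move=> x y /iinj /code_inj /pinj.
  by move=> x; exact: (hphi x).2.
- move=> J sJ g.
  have [|b [Wb Cb]] := bound [set iota (code (g j)) | j in J] _ (@lt_c_image _ _ (fun j => iota (code (g j))) J sJ).
    by move=> _ [j _ <-].
  by exists b => j Jj; split => //; apply: Cb; exists j.
Qed.

Fixpoint bitsx (x : set nat) (m : nat) : seq bool :=
  if m is m'.+1 then `[< x m' >] :: bitsx x m' else [::].

Lemma size_bitsx x m : size (bitsx x m) = m.
Proof. by elim: m => //= m ->. Qed.

Definition dsel (x : set nat) (m : nat) : nat := pickle (m, bitsx x m).

Definition Fm (m : nat) : set nat :=
  [set k | exists s : seq bool, size s = m /\ k = pickle (m, s)].

Lemma dsel_F x m : Fm m (dsel x m).
Proof. by exists (bitsx x m); rewrite size_bitsx. Qed.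

Lemma Fm_disj m m' k : Fm m k -> Fm m' k -> m = m'.
Proof.
move=> [s [_ ->]] [s' [_ /(pcan_inj pickleK)]]; by case.
Qed.

Lemma dsel_inj x m m' : dsel x m = dsel x m' -> m = m'.
Proof. by move=> e; apply: (Fm_disj (dsel_F x m)); rewrite e; exact: dsel_F. Qed.

Lemma bits_eq x y m : bitsx x m = bitsx y m ->
  forall i, (i < m)%N -> `[< x i >] = `[< y i >].
Proof.
elim: m => // m IH /= [e1 e2] i; rewrite ltnS leq_eqVlt => /orP [/eqP ->//|].
exact: IH.
Qed.

Lemma dsel_diff x y : x <> y -> exists i0, forall m, (i0 < m)%N -> dsel x m <> dsel y m.
Proof.
move=> nxy.
have [i0 ni0] : exists i0, ~ (x i0 <-> y i0).
  apply: contrapT => h; apply: nxy; apply: funext => i; apply: propext.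
  by apply: contrapT => hi; apply: h; exists i.
exists i0 => m i0m /(pcan_inj pickleK) [] /bits_eq /(_ i0 i0m) e.
apply: ni0; split => h.
  have hx : `[< x i0 >] by apply/asboolP.
  by move: hx; rewrite e => /asboolP.
have hy : `[< y i0 >] by apply/asboolP.
by move: hy; rewrite -e => /asboolP.
Qed.


Lemma dsel_free_neq (v : set_system nat) x y : free_ultrafilter v -> x <> y ->
  image_filter (dsel x) v <> image_filter (dsel y) v.
Proof.
move=> fv /dsel_diff [i0 hi0] e; have Uv := fv.1.
have : image_filter (dsel y) v (dsel x @` [set m | (i0.+1 <= m)%N]).
  by rewrite -e; exists [set m | (i0.+1 <= m)%N] => //; exact: free_ge.
move=> [A vA sA].
have [m [Am Em]] : exists m, A m /\ (i0.+1 <= m)%N.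
  have : v (A `&` [set m | (i0.+1 <= m)%N]) by apply: filterI => //; exact: free_ge.
  by move=> /filter_ex [m []]; exists m.
have [m' Em' e'] : (dsel x @` [set m | (i0.+1 <= m)%N]) (dsel y m) by apply: sA; exists m.
have mm : m' = m by apply: (Fm_disj (dsel_F x m')); rewrite e'; exact: dsel_F.
by apply: (hi0 m Em); rewrite -e' mm.
Qed.

Lemma image_dsel_nonprinc (v : set_system nat) x : free_ultrafilter v ->
  forall k, ~ image_filter (dsel x) v [set k].
Proof.
move=> fv k [A vA sA]; apply: (free_not_atmost1 fv _ vA) => m m' Am Am'.
have e1 : dsel x m = k by apply: sA; exists m.
have e2 : dsel x m' = k by apply: sA; exists m'.
by apply: (dsel_inj (x := x)); rewrite e1 e2.
Qed.

Lemma image_filter_comp (f g : nat -> nat) (F : set_system nat) : Filter F ->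
  image_filter f (image_filter g F) = image_filter (f \o g) F.
Proof.
move=> FF; apply/seteqP; split => B.
  move=> [A' [A FA sA] sB]; exists A => //.
  by move=> _ [x Ax <-]; apply: sB; exists (g x) => //; apply: sA; exists x.
move=> [A FA sA]; exists (g @` A); first by exists A.
by move=> _ [_ [x Ax <-] <-]; apply: sA; exists x.
Qed.

Lemma image_filter_id (F : set_system nat) : Filter F -> image_filter id F = F.
Proof.
move=> FF; apply/seteqP; split => B.
  by move=> [A FA sA]; apply: filterS FA => x Ax; apply: sA; exists x.
by move=> FB; exists B => // _ [x Bx <-].
Qed.

Definition fstcode (k : nat) : nat :=
  if (unpickle k : option (nat * seq bool)) is Some p then p.1 else 0%N.

Lemma proj1_dsel x m : fstcode (dsel x m) = m.
Proof.
rewrite /fstcode /dsel.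
have -> : (unpickle (pickle (m, bitsx x m)) : option (nat * seq bool)) = Some (m, bitsx x m).
  exact: pickleK.
by [].
Qed.

Lemma dsel_change (v : set_system nat) x y : Filter v ->
  image_filter (dsel y) v = image_filter (dsel y \o fstcode) (image_filter (dsel x) v).
Proof.
move=> Fv; rewrite image_filter_comp //; congr image_filter.
by apply: funext => m /=; rewrite proj1_dsel.
Qed.


Section Counting.
Variable q : set nat -> set_system nat.
Hypothesis qsel : forall a, selective (q a).
Hypothesis qinc : forall a b, a <> b -> incomparable (q a) (q b).
Variable G : set nat -> set (nat -> nat).
Hypothesis Gsmall : forall a (phi : set nat -> (nat -> nat)),
  (forall x y, phi x = phi y -> x = y) -> ~ (forall x, G a (phi x)).

Definition Phi (p : set_system nat) := exists a g, G a g /\ p = image_filter g (q a).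

Lemma good_sel (v : set_system nat) : free_ultrafilter v ->
  exists x, ~ Phi (image_filter (dsel x) v).
Proof.
move=> fv; have Uv := fv.1.
apply: contrapT => nx.
have hx : forall x, exists p : set nat * (nat -> nat),
    G p.1 p.2 /\ image_filter (dsel x) v = image_filter p.2 (q p.1).
  move=> x; apply: contrapT => nh; apply: nx; exists x => -[a [g [Gag e]]].
  by apply: nh; exists (a, g).
have [ag Hag] := choice hx.
pose a0 := (ag set0).1.
have ha : forall x, (ag x).1 = a0.
  move=> x; apply: contrapT => ne.
  have Ux := (qsel (ag x).1).1.1.
  have [f [bf ef]] : exists f, bijective f /\ image_filter f (q (ag x).1) = q a0.
    apply: (rk_bij (h := dsel set0 \o fstcode \o (ag x).2) (g := (ag set0).2)).
    - exact: qsel.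
    - exact: qsel.
    - rewrite -(Hag set0).2 -image_filter_comp // -(Hag x).2.
      by rewrite -dsel_change.
    - rewrite -image_filter_comp // -(Hag x).2 -dsel_change //.
      exact: image_dsel_nonprinc.
  exact: (qinc ne bf ef).
apply: (Gsmall (a := a0) (phi := fun x => (ag x).2)).
  move=> x y e; apply: contrapT => nxy; apply: (dsel_free_neq fv nxy).
  by rewrite (Hag x).2 (Hag y).2 e ha ha.
by move=> x; rewrite -(ha x); exact: (Hag x).1.
Qed.

End Counting.

Lemma sys_open (A : set nat) : open [set p : sysnat | p A].
Proof.
exists [set [set p : sysnat | p A]]; last by rewrite bigcup_set1.
by move=> _ ->; exact: (@finI_from1 _ _ setT (fun A : set nat => [set p : sysnat | p A]) A).
Qed.

Lemma sub_open (X : set sysnat) (A : set nat) :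
  open [set z : set_type X | (set_val z) A].
Proof. by exists [set p : sysnat | p A] => //; exact: sys_open. Qed.

Lemma sub_cvg (X : set sysnat) (F : set_system (set_type X)) (z : set_type X) :
  Filter F -> (forall A, (set_val z) A -> F [set w | (set_val w) A]) ->
  forall U, nbhs z U -> F U.
Proof.
move=> FF H U; rewrite nbhsE => -[B [[C oC <-] Cz] sBU].
apply: filterS sBU _.
case: oC Cz => D' sD' <- [E D'E Ez].
apply: (@filterS _ _ _ (set_val @^-1` E)); first by move=> w Ew; exists E.
have [fs fsub fe] := sD' E D'E.
rewrite -fe preimage_bigcap; apply: filter_bigI => i ifs.
by apply: H; move: Ez; rewrite -fe; apply.
Qed.

Lemma prod_cvg (I : Type) (K : topologicalType) (F : set_system {ptws I -> K})
    (z : {ptws I -> K}) :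
  Filter F -> (forall i U, nbhs (z i) U -> F [set f | U (f i)]) ->
  forall U, nbhs z U -> F U.
Proof.
move=> FF H; suff : F --> z by move=> cv U /cv.
apply/cvg_sup => i A /= [_ [[C oC <-] Cz sCA]].
apply: filterS sCA _; apply: H; exact: open_nbhs_nbhs.
Qed.

Lemma viet_open_up (T : topologicalType) (U : set T) :
  open U -> open [set A : vietoris T | A `<=` U].
Proof.
move=> oU; exists [set [set A : vietoris T | A `<=` U]]; last by rewrite bigcup_set1.
move=> _ ->.
exact: (@finI_from1 _ _ [set Ub : set T * bool | open Ub.1]
  (fun Ub => if Ub.2 then [set A : vietoris T | A `<=` Ub.1]
             else [set A : vietoris T | A `&` Ub.1 !=set0]) (U, true)).
Qed.

Lemma viet_open_low (T : topologicalType) (U : set T) :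
  open U -> open [set A : vietoris T | A `&` U !=set0].
Proof.
move=> oU; exists [set [set A : vietoris T | A `&` U !=set0]]; last by rewrite bigcup_set1.
move=> _ ->.
exact: (@finI_from1 _ _ [set Ub : set T * bool | open Ub.1]
  (fun Ub => if Ub.2 then [set A : vietoris T | A `<=` Ub.1]
             else [set A : vietoris T | A `&` Ub.1 !=set0]) (U, false)).
Qed.

Lemma CL_open_up (T : topologicalType) (U : set T) :
  open U -> open [set B : set_type (CL T) | (set_val B : vietoris T) `<=` U].
Proof. by move=> oU; exists [set A : vietoris T | A `<=` U] => //; exact: viet_open_up. Qed.

Lemma CL_open_low (T : topologicalType) (U : set T) :
  open U -> open [set B : set_type (CL T) | (set_val B : vietoris T) `&` U !=set0].
Proof. by move=> oU; exists [set A : vietoris T | A `&` U !=set0] => //; exact: viet_open_low. Qed.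

Section Construction.
Variable q : set nat -> set_system nat.
Hypothesis qsel : forall a, selective (q a).
Hypothesis qinc : forall a b, a <> b -> incomparable (q a) (q b).
Variable G : set nat -> set (nat -> nat).
Hypothesis Gsmall : forall a (phi : set nat -> (nat -> nat)),
  (forall x y, phi x = phi y -> x = y) -> ~ (forall x, G a (phi x)).
Hypothesis Gcof : forall J : set (set nat), lt_c J ->
  forall g : set nat -> (nat -> nat), exists a, forall j, J j -> G a (g j).

Definition xs (v : set_system nat) : set nat :=
  xget set0 [set x | ~ Phi q G (image_filter (dsel x) v)].

Lemma xs_good v : free_ultrafilter v -> ~ Phi q G (image_filter (dsel (xs v)) v).
Proof.
move=> fv; exact: (xgetPex set0 (good_sel qsel qinc Gsmall fv)).
Qed.

Definition Zset (p : sysnat) :=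
  exists v, free_ultrafilter v /\ p = image_filter (dsel (xs v)) v.

Definition Xs : set sysnat := [set p | UltraFilter p /\ ~ Zset p].

Lemma principal_in_X k : Xs (principal_filter k).
Proof.
split; first exact: principal_filter_ultra.
move=> [v [fv e]]; have nP := @image_dsel_nonprinc v (xs v) fv k; apply: nP; rewrite -e.
exact/principal_filterP.
Qed.

Lemma omega_sub : omega_in_beta `<=` Xs.
Proof. by move=> p [k _ <-]; exact: principal_in_X. Qed.

Lemma X_sub_beta : Xs `<=` beta_omega.
Proof. by move=> p []. Qed.

Lemma relcc (J : set (set nat)) : lt_c J ->
  rel_countably_compact
    [set f : {ptws J -> set_type Xs} | forall i, omega_in_beta (set_val (f i))].
Proof.
move=> sJ S SY _ iS.
have [s sS sinj] : exists2 s : nat -> {ptws J -> set_type Xs},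
    (forall n, S (s n)) & (forall n m, s n = s m -> n = m).
  move/infiniteP: iS => /card_leP /injfunPex [F _ Finj].
  exists (fun n => set_val (F (SigSub (@mem_set _ [set: nat] n I)))).
    by move=> n; exact: set_valP.
  move=> n m /val_inj /Finj e.
  have := e (mem_set I) (mem_set I).
  by move/(congr1 set_val).
pose gg (x : set nat) (n : nat) : nat := xget 0%N
  [set k | exists j : set_type J, set_val j = x /\ principal_filter k = set_val (s n j)].
have ggP : forall (j : set_type J) n,
    principal_filter (gg (set_val j) n) = set_val (s n j).
  move=> j n.
  have : exists k, [set k | exists j' : set_type J, set_val j' = set_val j /\
      principal_filter k = set_val (s n j')] k.
    have [k _ ek] := SY _ (sS n) j.
    by exists k, j.
  move=> /(xgetPex 0%N) [j' [/val_inj ej ek]].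
  by rewrite /gg ek ej.
have [b Gb] := Gcof sJ gg.
have Uq := (qsel b).1.1.
pose zp (j : set_type J) : sysnat := image_filter (gg (set_val j)) (q b).
have zX : forall j, Xs (zp j).
  move=> j; split; first exact: image_filter_ultra.
  move=> [v [fv e]]; apply: (xs_good fv); rewrite -e.
  exists b, (gg (set_val j)); split => //; apply: Gb; exact: set_valP.
pose z : {ptws J -> set_type Xs} := fun j => SigSub (mem_set (zX j)).
have cv : forall U, nbhs z U -> q b [set n | U (s n)].
  apply: (prod_cvg (F := s @ q b)) => j U nU.
  apply: (sub_cvg (F := (fun n => s n j) @ q b)) nU => A [C qC sC].
  suff : q b [set n | set_val (s n j) A] by [].
  apply: filterS qC => n Cn /=.
  rewrite -ggP; apply/principal_filterP; apply: sC; exists n => //.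
exists z => U nU.
have fq := (qsel b).1.
have : q b ([set n | U (s n)] `&` ~` [set n | s n = z]).
  apply: filterI; first exact: cv.
  case: (in_ultra_setVsetC [set n | s n = z] Uq) => // h; exfalso.
  apply: (free_not_atmost1 fq _ h) => n m /= e1 e2; apply: sinj.
  by rewrite e1 e2.
move=> /filter_ex [n [Un nz]]; exists (s n); split => //; first exact/eqP.
Qed.

End Construction.

Fixpoint allbits (m : nat) : seq (seq bool) :=
  if m is m'.+1 then [seq true :: s | s <- allbits m'] ++ [seq false :: s | s <- allbits m']
  else [:: [::]].

Lemma allbits_complete (s : seq bool) : s \in allbits (size s).
Proof.
elim: s => [|b s IH] //=; rewrite mem_cat; case: b; apply/orP; [left|right];
  by rewrite mem_map // => x y [].
Qed.

Lemma allbits_size m s : s \in allbits m -> size s = m.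
Proof.
elim: m s => [|m IH] s /=; first by rewrite inE => /eqP ->.
by rewrite mem_cat => /orP [] /mapP [s' /IH <- ->].
Qed.

Definition flist (m : nat) : seq nat := [seq pickle (m, s) | s <- allbits m].

Lemma flistP m k : Fm m k <-> k \in flist m.
Proof.
split.
  by move=> [s [sz ->]]; apply: map_f; rewrite -sz; exact: allbits_complete.
by move=> /mapP [s /allbits_size sz ->]; exists s.
Qed.

Lemma nbhs_list (T : topologicalType) (x : T) (L : seq nat) (N : nat -> set T) :
  (forall k, k \in L -> nbhs x (N k)) -> nbhs x [set y | forall k, k \in L -> N k y].
Proof.
elim: L => [|a L IH] H.
  by apply: filterS (@filterT _ _ _); move=> y _ k; rewrite in_nil.
have h1 : nbhs x (N a) by apply: H; exact: mem_head.
have h2 : nbhs x [set y | forall k, k \in L -> N k y].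
  by apply: IH => k kL; apply: H; rewrite inE kL orbT.
apply: filterS (filterI h1 h2) => y [Na HL] k; rewrite inE => /orP [/eqP ->//|].
exact: HL.
Qed.

Section CLpart.
Variable q : set nat -> set_system nat.
Variable G : set nat -> set (nat -> nat).

Local Notation X := (Xs q G).
Local Notation XT := (set_type (Xs q G)).

Definition hatP (P : set nat) : set XT := [set z | set_val z P].

Definition form (m : nat) (B : set XT) :=
  B `<=` hatP (Fm m) /\
  forall k, Fm m k -> exists2 z, B z & set_val z = principal_filter k.

Lemma ultraX (z : XT) : UltraFilter (set_val z).
Proof. exact: (set_valP z).1. Qed.

Lemma single_princ (z : XT) k : set_val z [set k] -> set_val z = principal_filter k.
Proof.
move=> zk; have Uz := ultraX z; apply: esym.
apply: (@max_filter _ (set_val z) Uz); first exact: principal_filter_proper.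
move=> A zA; apply/principal_filterP.
have /filter_ex [y [Ay yk]] : set_val z (A `&` [set k]) by apply: filterI.
by rewrite -yk.
Qed.

Lemma hat_open P : open (hatP P).
Proof. exact: sub_open. Qed.

Lemma form_uniq m m' (B : set_type (CL XT)) :
  form m (set_val B) -> form m' (set_val B) -> m = m'.
Proof.
move=> fm fm'; have [_ [z Bz]] := set_valP B.
have Uz := ultraX z.
have /filter_ex [y [y1 y2]] : set_val z (Fm m `&` Fm m').
  by apply: filterI; [exact: fm.1|exact: fm'.1].
exact: Fm_disj y1 y2.
Qed.

Definition fCL (B : set_type (CL XT)) : Rdefinitions.R :=
  if pselect (exists m, form m (set_val B)) is left _
  then ((xget 0%N [set m | form m (set_val B)]).+1)%:R%R else 0%R.

Lemma fCL_form m B : form m (set_val B) -> fCL B = (m.+1)%:R%R.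
Proof.
move=> fm; rewrite /fCL; case: pselect => [ex|nex]; last by exfalso; apply: nex; exists m.
have := xgetPex 0%N ex => /= fx.
by rewrite (form_uniq fx fm).
Qed.

Lemma fCL_noform B : ~ (exists m, form m (set_val B)) -> fCL B = 0%R.
Proof. by move=> nf; rewrite /fCL; case: pselect. Qed.

End CLpart.

Section CLpart2.
Variable q : set nat -> set_system nat.
Variable G : set nat -> set (nat -> nat).

Local Notation XT := (set_type (Xs q G)).
Local Notation CLT := (set_type (CL (set_type (Xs q G)))).
Local Notation hat := (@hatP q G).
Local Notation frm := (@form q G).

Lemma loc_form m (B0 : CLT) : frm m (set_val B0) ->
  nbhs B0 [set B : CLT | frm m (set_val B)].
Proof.
move=> fm.
have n1 : nbhs B0 [set B : CLT | (set_val B : vietoris XT) `<=` hat (Fm m)].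
  apply: open_nbhs_nbhs; split; first by apply: CL_open_up; exact: hat_open.
  exact: fm.1.
have n2 : nbhs B0 [set B : CLT | forall k, k \in flist m ->
    [set B : CLT | (set_val B : vietoris XT) `&` hat [set k] !=set0] B].
  apply: nbhs_list => k /flistP kF.
  apply: open_nbhs_nbhs; split; first by apply: CL_open_low; exact: hat_open.
  have [z Bz zk] := fm.2 k kF; exists z; split => //.
  by rewrite /hatP /= zk; exact/principal_filterP.
apply: filterS (filterI n1 n2) => B [h1 h2]; split => // k /flistP kF.
have [z [Bz zk]] := h2 k kF; exists z => //; exact: single_princ.
Qed.

Lemma loc_noform m (B0 : CLT) : ~ frm m (set_val B0) ->
  nbhs B0 [set B : CLT | ~ frm m (set_val B)].
Proof.
move=> nf.
case: (pselect ((set_val B0 : vietoris XT) `<=` hat (Fm m))) => [sub|nsub].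
  have [k [kF nk]] : exists k, Fm m k /\
      ~ exists2 z, (set_val B0 : vietoris XT) z & set_val z = principal_filter k.
    apply: contrapT => h; apply: nf; split => // k kF.
    by apply: contrapT => hk; apply: h; exists k.
  have nU : nbhs B0 [set B : CLT | (set_val B : vietoris XT) `<=` hat (~` [set k])].
    apply: open_nbhs_nbhs; split; first by apply: CL_open_up; exact: hat_open.
    move=> z Bz; case: (in_ultra_setVsetC [set k] (ultraX z)) => // zk.
    by exfalso; apply: nk; exists z => //; exact: single_princ.
  apply: filterS nU => B BU [_ fB].
  have [z Bz zk] := fB k kF.
  by have := BU z Bz; rewrite /hatP /= zk => /principal_filterP; apply.
have [z Bz nz] : exists2 z, (set_val B0 : vietoris XT) z & ~ set_val z (Fm m).
  apply: contrapT => h; apply: nsub => z Bz; apply: contrapT => nz.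
  by apply: h; exists z.
have zc : set_val z (~` Fm m).
  by case: (in_ultra_setVsetC (Fm m) (ultraX z)).
have nL : nbhs B0 [set B : CLT | (set_val B : vietoris XT) `&` hat (~` Fm m) !=set0].
  apply: open_nbhs_nbhs; split; first by apply: CL_open_low; exact: hat_open.
  by exists z.
apply: filterS nL => B [z' [Bz' z'c]] [fB _].
have Uz' := ultraX z'.
have /filter_ex [y [y1 y2]] : set_val z' (Fm m `&` ~` Fm m).
  by apply: filterI => //; exact: fB.
exact: y2 y1.
Qed.

End CLpart2.

Section CLpart3.
Variable q : set nat -> set_system nat.
Variable G : set nat -> set (nat -> nat).

Local Notation XT := (set_type (Xs q G)).
Local Notation CLT := (set_type (CL (set_type (Xs q G)))).
Local Notation hat := (@hatP q G).
Local Notation frm := (@form q G).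

Lemma loc_none (B0 : CLT) : ~ (exists m, frm m (set_val B0)) ->
  nbhs B0 [set B : CLT | ~ exists m, frm m (set_val B)].
Proof.
move=> nf; apply: contrapT => H.
have hN : forall N, nbhs B0 N -> exists B m, N B /\ frm m (set_val B).
  move=> N nN; apply: contrapT => h; apply: H; apply: filterS nN => B NB [m fm].
  by apply: h; exists B, m.
have excl : forall k, exists N, nbhs B0 N /\
    forall B m, N B -> (m < k)%N -> ~ frm m (set_val B).
  elim => [|k [N [nN hk]]].
    by exists setT; split => //; exact: filterT.
  have nk := loc_noform (fun h => nf (ex_intro _ k h)).
  exists (N `&` [set B : CLT | ~ frm k (set_val B)]); split; first exact: filterI.
  move=> B m [NB nB]; rewrite ltnS leq_eqVlt => /orP [/eqP ->//|]; exact: hk.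
pose Gf := [set P : set nat | exists N, nbhs B0 N /\ exists k, forall m, (k <= m)%N ->
   (exists B, N B /\ frm m (set_val B)) -> P m].
have FGf : Filter Gf.
  split.
  - by exists setT; split; [exact: filterT|exists 0%N].
  - move=> P1 P2 [N1 [n1 [k1 h1]]] [N2 [n2 [k2 h2]]].
    exists (N1 `&` N2); split; first exact: filterI.
    exists (maxn k1 k2) => m; rewrite geq_max => /andP [m1 m2] [B [[B1 B2] fB]].
    by split; [apply: h1 => //; exists B|apply: h2 => //; exists B].
  - move=> P1 P2 s12 [N [nN [k hk]]]; exists N; split => //; exists k => m km hm.
    by apply: s12; apply: hk.
have PGf : ProperFilter Gf.
  apply: Build_ProperFilter_ex => // P [N [nN [k hk]]].
  have [N' [nN' hN']] := excl k.
  have [B [m [[NB N'B] fm]]] := hN _ (filterI nN nN').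
  exists m; apply: hk; last by exists B.
  by rewrite leqNgt; apply/negP => mk; exact: (hN' B m N'B mk).
have [v [Uv sGv]] := ultraFilterLemma PGf.
have fv : free_ultrafilter v.
  split => //; apply/seteqP; split => // x hx.
  have vx : v [set m | (x < m)%N].
    apply: sGv; exists setT; split; first exact: filterT.
    by exists x.+1 => m xm _.
  by have := hx _ vx; rewrite /= ltnn.
pose d := dsel (xs q G v).
have vI : forall N, nbhs B0 N -> v [set m | exists B, N B /\ frm m (set_val B)].
  by move=> N nN; apply: sGv; exists N; split => //; exists 0%N.
have notZ : forall z, (set_val B0 : vietoris XT) z -> ~ set_val z (range d).
  move=> z B0z zr; have Uz := ultraX z.
  apply: (set_valP z).2; exists v; split => //.
  apply: esym; apply: (@max_filter _ (set_val z) Uz); first exact: image_filter_proper.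
  move=> P zP.
  have zPd : set_val z (P `&` range d) by apply: filterI.
  have nL : nbhs B0 [set B : CLT | (set_val B : vietoris XT) `&` hat (P `&` range d) !=set0].
    apply: open_nbhs_nbhs; split; first by apply: CL_open_low; exact: hat_open.
    by exists z.
  exists [set m | exists B, [set B : CLT | (set_val B : vietoris XT) `&`
      hat (P `&` range d) !=set0] B /\ frm m (set_val B)]; first exact: vI.
  move=> _ [m [B [[z' [Bz' z'P]] fm]] <-].
  have Uz' := ultraX z'.
  have z'F := fm.1 z' Bz'.
  have zz : set_val z' (P `&` range d) := z'P.
  have : set_val z' ((P `&` range d) `&` Fm m) by apply: filterI.
  move=> /filter_ex [y [[Py [m' _ dm'y]] Fy]].
  have mm : m' = m by apply: (Fm_disj (dsel_F (xs q G v) m')); rewrite -/d dm'y.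
  by rewrite -mm -/d dm'y.
have B0W : (set_val B0 : vietoris XT) `<=` hat (~` range d).
  move=> z B0z; case: (in_ultra_setVsetC (range d) (ultraX z)) => // h.
  by exfalso; exact: (notZ z B0z h).
have nU : nbhs B0 [set B : CLT | (set_val B : vietoris XT) `<=` hat (~` range d)].
  apply: open_nbhs_nbhs; split => //; apply: CL_open_up; exact: hat_open.
have /filter_ex [m [B [BW fm]]] := vI _ nU.
have [z Bz zk] := fm.2 (d m) (dsel_F _ m).
have := BW z Bz; rewrite /hatP /= zk => /principal_filterP; apply.
by exists m.
Qed.

End CLpart3.

Import Order.TTheory Num.Theory GRing.Theory.

Section CLpart4.
Variable q : set nat -> set_system nat.
Variable G : set nat -> set (nat -> nat).

Local Notation XT := (set_type (Xs q G)).
Local Notation CLT := (set_type (CL (set_type (Xs q G)))).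
Local Notation hat := (@hatP q G).
Local Notation frm := (@form q G).

Lemma fCL_cont : continuous (@fCL q G).
Proof.
move=> B0.
have [N [nN hN]] : exists N, nbhs B0 N /\ forall B, N B -> fCL B = fCL B0.
  case: (pselect (exists m, frm m (set_val B0))) => [[m fm]|nf].
    exists [set B : CLT | frm m (set_val B)]; split; first exact: loc_form.
    by move=> B fB; rewrite (fCL_form fB) (fCL_form fm).
  exists [set B : CLT | ~ exists m, frm m (set_val B)]; split; first exact: loc_none.
  by move=> B nB; rewrite (fCL_noform nB) (fCL_noform nf).
move=> U nU; apply: filterS nN => B NB /=; rewrite hN.
exact: nbhs_singleton nU.
exact: NB.
Qed.

Lemma hatF_closed m : closed (hat (Fm m)).
Proof.
have -> : hat (Fm m) = ~` hat (~` Fm m).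
  apply/seteqP; split => z /=.
    move=> zF zc; have Uz := ultraX z.
    have /filter_ex [y [y1 y2]] : set_val z (Fm m `&` ~` Fm m) by apply: filterI.
    exact: y2 y1.
  by move=> nz; case: (in_ultra_setVsetC (Fm m) (ultraX z)).
apply: open_closedC; exact: hat_open.
Qed.

Definition ptX (k : nat) : XT := SigSub (mem_set (principal_in_X q G k)).

Lemma ptX_val k : set_val (ptX k) = principal_filter k.
Proof. by []. Qed.

Lemma hatF_CL m : CL XT (hat (Fm m)).
Proof.
split; first exact: hatF_closed.
exists (ptX (dsel set0 m)); rewrite /hatP /= ; apply/principal_filterP.
exact: dsel_F.
Qed.

Definition Bm (m : nat) : CLT := SigSub (mem_set (hatF_CL m)).

Lemma form_Bm m : frm m (set_val (Bm m)).
Proof.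
split => // k kF; exists (ptX k) => //.
by rewrite /hatP /=; apply/principal_filterP.
Qed.

Lemma not_pc : ~ pseudocompact CLT.
Proof.
move=> pc; have [M hM] := pc _ fCL_cont.
have := hM (Bm (Num.truncn M)); rewrite (fCL_form (form_Bm _)).
rewrite ger0_norm // => h.
have := lt_le_trans (truncnS_gt M) h.
by rewrite ltxx.
Qed.

End CLpart4.

Theorem mainTheorem8 :
  c_regular ->
  (exists q : set nat -> set_system nat,
      (forall a, selective (q a)) /\
      (forall a b, a <> b -> incomparable (q a) (q b))) ->
  exists X : set sysnat,
    omega_in_beta `<=` X /\ X `<=` beta_omega /\
    (forall J : set (set nat), lt_c J ->
       rel_countably_compact
         [set f : {ptws J -> set_type X} |
            forall i, omega_in_beta (set_val (f i))]) /\
    ~ pseudocompact (set_type (CL (set_type X))).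
Proof.
move=> creg [q [qsel qinc]].
have [G [Gsmall Gcof]] := cofinal creg.
exists (Xs q G); split; first exact: omega_sub.
split; first exact: X_sub_beta.
split; last exact: not_pc.
move=> J sJ; exact: (relcc qsel qinc Gsmall Gcof sJ).
Qed.
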